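(* Let $k\ge2$, let $f_1,\ldots,f_k$ be primitive forms of square-free levels with weights $\kappa_1,\ldots,\kappa_k$, and let $\nu_1,\ldots,\nu_k$ be distinct positive integers with $a_{f_i}(\nu_i)\neq0$ for all $i$. Put $K=\max\{\nu_1,\ldots,\nu_k\}$. Then there exists a real number $c_0>0$, depending on $K$ and $f_1,\ldots,f_k$, such that for every positive integer $m$ with $m\equiv0\pmod{(2K)!}$ and every $i=1,\ldots,k$, $$c_0|\lambda_{f_i}(m_i)|\le|\lambda_{f_i}(m+\nu_i)|\le c_0^{-1}|\lambda_{f_i}(m_i)|$$ and $$c_0|\lambda_{f_i}(m_i)|\le\frac{|a_{f_i}(m+\nu_i)|}{m^{(\kappa_i-1)/2}}\le c_0^{-1}|\lambda_{f_i}(m_i)|,$$ where $m_i$ is defined by $m+\nu_i=\nu_im_i$.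
   Context: A primitive form of weight $\kappa$ and level $N$ is a holomorphic cusp form of weight $\kappa$ for $\Gamma_0(N)$ with trivial character which is a normalized Hecke eigenform for all Hecke operators and all Atkin–Lehner involutions; $f(z)=\sum_{n\ge1}a_f(n)q^n$ is its Fourier expansion, and $\lambda_f(n)=a_f(n)/n^{(\kappa-1)/2}$. *)

(* Defs.v *)
From Stdlib Require Import Reals ZArith Znumtheory Arith List Lia.
From Coquelicot Require Import Coquelicot.
Open Scope R_scope.

Fixpoint cpow (z : C) (n : nat) : C :=
  match n with O => RtoC 1 | S n' => Cmult z (cpow z n') end.

Definition csum (l : list nat) (g : nat -> C) : C :=
  fold_right (fun i acc => Cplus (g i) acc) (RtoC 0) l.

(* q = e^{2 pi i z} *)
Definition qexp (z : C) : C :=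
  Cmult (RtoC (exp (-(2 * PI * Im z)))) (cos (2 * PI * Re z), sin (2 * PI * Re z)).

Definition mobius (a b c d : Z) (z : C) : C :=
  Cdiv (Cplus (Cmult (RtoC (IZR a)) z) (RtoC (IZR b)))
       (Cplus (Cmult (RtoC (IZR c)) z) (RtoC (IZR d))).

Definition slash (kappa : nat) (a b c d : Z) (f : C -> C) (z : C) : C :=
  Cmult (RtoC (sqrt (IZR (a * d - b * c)) ^ kappa))
    (Cmult (Cinv (cpow (Cplus (Cmult (RtoC (IZR c)) z) (RtoC (IZR d))) kappa))
           (f (mobius a b c d z))).

Definition holomorphic_on_H (f : C -> C) : Prop :=
  forall z : C, 0 < Im z -> ex_derive (f : C_AbsRing -> C_NormedModule) z.

Definition modular_Gamma0 (kappa N : nat) (f : C -> C) : Prop :=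
  forall a b c d : Z, (a * d - b * c = 1)%Z -> (Z.of_nat N | c)%Z ->
    forall z : C, 0 < Im z -> slash kappa a b c d f z = f z.

Definition vanishes_at_cusps (kappa : nat) (f : C -> C) : Prop :=
  forall a b c d : Z, (a * d - b * c = 1)%Z ->
    forall eps : R, 0 < eps -> exists Y : R, forall z : C,
      Y < Im z -> Cmod (slash kappa a b c d f z) < eps.

Definition fourier_expansion (f : C -> C) (a : nat -> C) : Prop :=
  a O = RtoC 0 /\
  forall z : C, 0 < Im z ->
    is_series (fun n => Cmult (a n) (cpow (qexp z) n)) (f z).

(* Hecke operator T_n on weight kappa, level N (trivial character):
   (T_n f)(z) = n^{kappa-1} sum_{ad = n, (a,N)=1} sum_{b=0}^{d-1} d^{-kappa} f((az+b)/d) *)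
Definition hecke (kappa N n : nat) (f : C -> C) (z : C) : C :=
  Cmult (RtoC (INR n ^ (kappa - 1)))
    (csum (seq 1 n) (fun a =>
       if andb (Nat.eqb (n mod a) 0) (Nat.eqb (Nat.gcd a N) 1) then
         csum (seq 0 (n / a)) (fun b =>
           Cmult (Cinv (cpow (RtoC (INR (n / a))) kappa))
                 (f (Cdiv (Cplus (Cmult (RtoC (INR a)) z) (RtoC (INR b)))
                          (RtoC (INR (n / a))))))
       else RtoC 0)).

Definition hecke_eigenform (kappa N : nat) (f : C -> C) : Prop :=
  forall n : nat, (0 < n)%nat -> exists lam : C,
    forall z : C, 0 < Im z -> hecke kappa N n f z = Cmult lam (f z).

(* Atkin-Lehner involutions W_Q, Q || N: matrices [[Qx, y],[Nz, Qw]] of determinant Q *)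
Definition atkin_lehner_eigenform (kappa N : nat) (f : C -> C) : Prop :=
  forall Q : nat, (0 < Q)%nat -> Nat.divide Q N -> Nat.gcd Q (N / Q) = 1%nat ->
    exists eps : C, forall x y w t : Z,
      (Z.of_nat Q * x * (Z.of_nat Q * t) - y * (Z.of_nat N * w) = Z.of_nat Q)%Z ->
      forall z : C, 0 < Im z ->
        slash kappa (Z.of_nat Q * x) y (Z.of_nat N * w) (Z.of_nat Q * t) f z
        = Cmult eps (f z).

Definition primitive_form (kappa N : nat) (f : C -> C) (a : nat -> C) : Prop :=
  (0 < N)%nat /\
  holomorphic_on_H f /\
  modular_Gamma0 kappa N f /\
  vanishes_at_cusps kappa f /\
  fourier_expansion f a /\
  a 1%nat = RtoC 1 /\
  hecke_eigenform kappa N f /\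
  atkin_lehner_eigenform kappa N f.

Definition squarefree (N : nat) : Prop :=
  forall d : nat, (1 < d)%nat -> ~ Nat.divide (d * d) N.

Definition lambda_f (kappa : nat) (a : nat -> C) (n : nat) : C :=
  Cdiv (a n) (RtoC (sqrt (INR n) ^ (kappa - 1))).

(* Main.v *)
Require Import Defs.
From Stdlib Require Import Reals ZArith Arith List Lia Lra.
From Coquelicot Require Import Coquelicot.
Open Scope R_scope.

Lemma cpow_RtoC (s : R) (j : nat) : cpow (RtoC s) j = RtoC (s ^ j).
Proof.
  induction j as [|j IH]; simpl. reflexivity. rewrite IH. rewrite RtoC_mult. reflexivity.
Qed.

Lemma lim_Re (l : C) : filterlim Re (locally l) (locally (Re l)).
Proof. intros P [eps HP]. exists eps. intros y Hy. apply HP. destruct Hy as [H1 H2]. exact H1. Qed.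
Lemma lim_Im (l : C) : filterlim Im (locally l) (locally (Im l)).
Proof. intros P [eps HP]. exists eps. intros y Hy. apply HP. destruct Hy as [H1 H2]. exact H2. Qed.

Lemma series_Re (u : nat -> C) (l : C) :
  is_series u l -> is_series (fun n => Re (u n)) (Re l).
Proof.
  intros H. unfold is_series in *.
  assert (E : forall N, sum_n (fun n => Re (u n)) N = Re (sum_n u N)).
  { induction N as [|N IH]. rewrite !sum_O. reflexivity.
    rewrite !sum_Sn, IH. reflexivity. }
  eapply filterlim_ext. intros N; symmetry; apply E.
  eapply filterlim_comp. exact H. apply lim_Re.
Qed.

Lemma series_Im (u : nat -> C) (l : C) :
  is_series u l -> is_series (fun n => Im (u n)) (Im l).
Proof.
  intros H. unfold is_series in *.
  assert (E : forall N, sum_n (fun n => Im (u n)) N = Im (sum_n u N)).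
  { induction N as [|N IH]. rewrite !sum_O. reflexivity.
    rewrite !sum_Sn, IH. reflexivity. }
  eapply filterlim_ext. intros N; symmetry; apply E.
  eapply filterlim_comp. exact H. apply lim_Im.
Qed.
Lemma lim0_bounded (u : nat -> R) : is_lim_seq u 0 -> exists M, forall n, Rabs (u n) <= M.
Proof.
  intros H. apply is_lim_seq_spec in H. destruct (H (mkposreal 1 Rlt_0_1)) as [N HN].
  exists (1 + sum_f_R0 (fun k => Rabs (u k)) N).
  intros n. destruct (le_lt_dec N n) as [h|h].
  - specialize (HN n h). simpl in HN. rewrite Rminus_0_r in HN.
    assert (0 <= sum_f_R0 (fun k => Rabs (u k)) N).
    { apply cond_pos_sum. intros; apply Rabs_pos. }
    lra.
  - assert (Rabs (u n) <= sum_f_R0 (fun k => Rabs (u k)) N).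
    { clear HN H. assert (h' : (n <= N)%nat) by lia. clear h. induction N as [|N IH].
      - replace n with 0%nat by lia. simpl. lra.
      - simpl. destruct (Nat.eq_dec n (S N)) as [->|hn].
        + assert (0 <= sum_f_R0 (fun k => Rabs (u k)) N).
          { apply cond_pos_sum. intros; apply Rabs_pos. } lra.
        + specialize (IH ltac:(lia)).
          pose proof (Rabs_pos (u (S N))). lra. }
    lra.
Qed.

Lemma real_unique (c : nat -> R) :
  (forall s, 0 < s < 1 -> is_series (fun j => c j * s ^ j) 0) -> forall j, c j = 0.
Proof.
  assert (key : forall c : nat -> R,
    (forall s, 0 < s < 1 -> is_series (fun j => c j * s ^ j) 0) -> c 0%nat = 0).
  { clear c. intros c H.
    assert (Hr : Rbar_lt 0 (CV_radius c)).
    { destruct (CV_radius_bounded c) as [Hub _].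
      assert (Hh : Rbar_le (1/2) (CV_radius c)).
      { apply Hub. apply lim0_bounded. apply ex_series_lim_0. eexists. apply H. lra. }
      destruct (CV_radius c) as [r| |]; simpl in *; auto; lra. }
    assert (Hc := PSeries_continuity c 0). rewrite Rabs_R0 in Hc. specialize (Hc Hr).
    rewrite <- (PSeries_0 c).
    apply Rabs_eq_0. apply Rle_antisym; [|apply Rabs_pos].
    apply Rnot_lt_le. intros Hlt.
    destruct (Hc _ Hlt) as [del [Hdel Hd]].
    set (s := Rmin (del/2) (1/2)).
    assert (Hs : 0 < s < 1). { unfold s. split. apply Rmin_pos; lra. pose proof (Rmin_r (del/2) (1/2)). lra. }
    assert (HP : PSeries c s = 0). { apply is_series_unique. apply H. exact Hs. }
    assert (Hds : Rabs (s - 0) < del).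
    { rewrite Rminus_0_r, Rabs_pos_eq by lra. pose proof (Rmin_l (del/2) (1/2)). unfold s in *. lra. }
    assert (HH : D_x no_cond 0 s /\ dist R_met s 0 < del). { split. split. exact I. apply Rlt_not_eq; lra. exact Hds. } specialize (Hd s HH). simpl in Hd. unfold R_dist in Hd.
    rewrite HP in Hd. rewrite Rabs_minus_sym, Rminus_0_r in Hd. lra. }
  intros H j. revert c H. induction j as [|j IH]; intros c H.
  - apply key; exact H.
  - assert (H0 : c 0%nat = 0) by (apply key; exact H).
    apply (IH (fun j => c (S j))). intros s Hs.
    assert (H1 : is_series (fun j => c (S j) * s ^ (S j)) 0).
    { apply (is_series_incr_1 (fun j => c j * s ^ j)).
      match goal with |- is_series _ ?l => replace l with 0 end. apply (H s Hs).
      rewrite H0. simpl. rewrite Rmult_0_l. unfold plus; simpl. ring. }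
    apply (is_series_scal (/ s)) in H1.
    unfold scal in H1; simpl in H1; unfold mult in H1; simpl in H1. rewrite Rmult_0_r in H1.
    eapply is_series_ext; [|exact H1].
    intros n. simpl. field. lra.
Qed.

Lemma complex_unique (c : nat -> C) :
  (forall s, 0 < s < 1 -> is_series (fun j => Cmult (c j) (cpow (RtoC s) j)) (RtoC 0)) ->
  forall j, c j = RtoC 0.
Proof.
  intros H j.
  assert (HR : forall j, Re (c j) = 0).
  { apply real_unique. intros s Hs. specialize (H s Hs). apply series_Re in H.
    eapply is_series_ext; [|exact H]. intros n. simpl. rewrite cpow_RtoC. simpl. unfold Re. ring. }
  assert (HI : forall j, Im (c j) = 0).
  { apply real_unique. intros s Hs. specialize (H s Hs). apply series_Im in H.
    eapply is_series_ext; [|exact H]. intros n. simpl. rewrite cpow_RtoC. simpl. unfold Im. ring. }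
  apply injective_projections; simpl. apply HR. apply HI.
Qed.
Definition sparse (d : nat) (v : nat -> C) := forall j, j mod d <> 0%nat -> v j = RtoC 0.

Lemma sp_pad (d : nat) (v : nat -> C) : (0 < d)%nat -> sparse d v ->
  forall L r, (r < d)%nat -> sum_n v (d * L + r) = sum_n v (d * L).
Proof.
  intros Hd Hs L r. induction r as [|r IH]; intros Hr.
  - rewrite Nat.add_0_r. reflexivity.
  - replace (d * L + S r)%nat with (S (d * L + r)) by lia.
    rewrite sum_Sn, IH by lia. rewrite Hs. 
    + exact (Cplus_0_r _).
    + rewrite <- (Nat.mod_unique _ d L (S r)); lia.
Qed.

Lemma sp_mul (d : nat) (v : nat -> C) : (0 < d)%nat -> sparse d v ->
  forall L, sum_n (fun l => v (d * l)%nat) L = sum_n v (d * L).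
Proof.
  intros Hd Hs L. induction L as [|L IH].
  - rewrite Nat.mul_0_r, !sum_O. rewrite Nat.mul_0_r. reflexivity.
  - rewrite sum_Sn, IH.
    replace (d * S L)%nat with (S (d * L + (d - 1))) by lia.
    rewrite sum_Sn. rewrite (sp_pad d v Hd Hs) by lia.
    replace (S (d * L + (d - 1))) with (d * S L)%nat by lia. reflexivity.
Qed.

Lemma compress (d : nat) (v : nat -> C) (S : C) : (0 < d)%nat -> sparse d v ->
  is_series v S -> is_series (fun l => v (d * l)%nat) S.
Proof.
  intros Hd Hs H. unfold is_series in *.
  eapply filterlim_ext. intros L; symmetry; apply (sp_mul d v Hd Hs).
  eapply filterlim_comp; [|exact H].
  intros P [N HN]. exists N. intros n Hn. apply HN. nia.
Qed.

Definition spread (a : nat) (u : nat -> C) (J : nat) : C :=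
  if Nat.eqb (J mod a) 0 then u (J / a)%nat else RtoC 0.

Lemma spread_series (a : nat) (u : nat -> C) (S : C) : (0 < a)%nat ->
  is_series u S -> is_series (spread a u) S.
Proof.
  intros Ha H. unfold is_series in *.
  assert (Hs : sparse a (spread a u)).
  { intros j Hj. unfold spread. apply Nat.eqb_neq in Hj. rewrite Hj. reflexivity. }
  assert (E : forall J, sum_n (spread a u) J = sum_n u (J / a)).
  { intros J. rewrite (Nat.div_mod_eq J a) at 1.
    rewrite (sp_pad a _ Ha Hs) by (apply Nat.mod_upper_bound; lia).
    rewrite <- (sp_mul a _ Ha Hs). apply sum_n_ext. intros l. unfold spread.
    rewrite Nat.mul_comm. rewrite Nat.Div0.mod_mul. simpl. rewrite Nat.div_mul by lia. reflexivity. }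
  eapply filterlim_ext. intros J; symmetry; apply E.
  eapply filterlim_comp; [|exact H].
  intros P [N HN]. exists (a * N)%nat. intros n Hn. apply HN.
  apply Nat.div_le_lower_bound; lia.
Qed.
Lemma is_series_zero : is_series (fun _ : nat => RtoC 0) (RtoC 0).
Proof.
  unfold is_series. eapply filterlim_ext.
  - intros N. symmetry. instantiate (1 := fun _ => RtoC 0).
    induction N as [|N IH]. rewrite sum_O. reflexivity. rewrite sum_Sn, IH. exact (Cplus_0_r _).
  - apply filterlim_const.
Qed.

Lemma csum_series (l : list nat) (g : nat -> nat -> C) (S : nat -> C) :
  (forall a, In a l -> is_series (g a) (S a)) ->
  is_series (fun j => csum l (fun a => g a j)) (csum l S).
Proof.
  induction l as [|x l IH]; intros H; simpl.
  - apply is_series_zero.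
  - apply (is_series_plus (g x) (fun j => csum l (fun a => g a j))).
    apply H; left; auto. apply IH. intros a Ha; apply H; right; auto.
Qed.

Lemma csum_mult_l (l : list nat) (K : C) (g : nat -> C) :
  csum l (fun a => Cmult K (g a)) = Cmult K (csum l g).
Proof. induction l as [|x l IH]; simpl. ring. rewrite IH. ring. Qed.

Lemma csum_ext_in (l : list nat) (g h : nat -> C) :
  (forall a, In a l -> g a = h a) -> csum l g = csum l h.
Proof.
  induction l as [|x l IH]; intros H; simpl. reflexivity.
  rewrite H by (left; auto). rewrite IH. reflexivity. intros; apply H; right; auto.
Qed.

Lemma csum_zero (l : list nat) (g : nat -> C) :
  (forall a, In a l -> g a = RtoC 0) -> csum l g = RtoC 0.
Proof.
  intros H. rewrite (csum_ext_in l g (fun _ => RtoC 0) H). clear H.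
  induction l as [|x l IH]; simpl. reflexivity. rewrite IH. ring.
Qed.

Lemma csum_const1 (s d : nat) : csum (seq s d) (fun _ => RtoC 1) = RtoC (INR d).
Proof.
  revert s. induction d as [|d IH]; intros s. reflexivity.
  rewrite S_INR, RtoC_plus. simpl seq. unfold csum. simpl fold_right. fold (csum (seq (S s) d) (fun _ => RtoC 1)).
  rewrite IH. ring.
Qed.

Lemma geom (u : C) (s d : nat) :
  Cmult (csum (seq s d) (fun b => cpow u b)) (Cminus u (RtoC 1)) = Cminus (cpow u (s + d)) (cpow u s).
Proof.
  revert s. induction d as [|d IH]; intros s; simpl.
  - rewrite Nat.add_0_r. ring.
  - replace (s + S d)%nat with (S s + d)%nat by lia.
    rewrite Cmult_plus_distr_r, IH. simpl. ring.
Qed.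

Lemma demoivre (t : R) (j : nat) : cpow (cos t, sin t) j = (cos (INR j * t), sin (INR j * t)).
Proof.
  induction j as [|j IH].
  - simpl. rewrite Rmult_0_l, cos_0, sin_0. reflexivity.
  - change (cpow (cos t, sin t) (S j)) with (Cmult (cos t, sin t) (cpow (cos t, sin t) j)). rewrite IH. rewrite S_INR. replace ((INR j + 1) * t) with (t + INR j * t) by ring.
    rewrite cos_plus, sin_plus. apply injective_projections; simpl; ring.
Qed.

Lemma cpow_scal (r : R) (u : C) (j : nat) : cpow (Cmult (RtoC r) u) j = Cmult (RtoC (r ^ j)) (cpow u j).
Proof.
  induction j as [|j IH]; simpl. ring. rewrite IH. rewrite RtoC_mult. ring.
Qed.

Lemma exp_pow (x : R) (k : nat) : exp x ^ k = exp (INR k * x).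
Proof.
  induction k as [|k IH]. simpl. rewrite Rmult_0_l, exp_0. reflexivity.
  rewrite S_INR. simpl pow. rewrite IH, <- exp_plus. f_equal. ring.
Qed.

Lemma cos_lt_1 (r d : nat) : (0 < r < d)%nat -> cos (2 * PI * (INR r / INR d)) < 1.
Proof.
  intros H. assert (Hd : 0 < INR d) by (apply lt_0_INR; lia).
  assert (Hr : 0 < INR r) by (apply lt_0_INR; lia).
  assert (Hrd : INR r < INR d) by (apply lt_INR; lia).
  replace (2 * PI * (INR r / INR d)) with (2 * (PI * (INR r / INR d))) by ring.
  rewrite cos_2a_sin.
  assert (0 < sin (PI * (INR r / INR d))).
  { apply sin_gt_0. apply Rmult_lt_0_compat. apply PI_RGT_0. apply Rdiv_lt_0_compat; lra.
    rewrite <- (Rmult_1_r PI) at 2. apply Rmult_lt_compat_l. apply PI_RGT_0.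
    apply Rmult_lt_reg_r with (INR d). lra. unfold Rdiv. rewrite Rmult_assoc, Rinv_l by lra. lra. }
  nra.
Qed.

Lemma root_sum (d j : nat) : (0 < d)%nat ->
  csum (seq 0 d) (fun b => cpow (cos (2 * PI * (INR b / INR d)), sin (2 * PI * (INR b / INR d))) j)
  = if Nat.eqb (j mod d) 0 then RtoC (INR d) else RtoC 0.
Proof.
  intros Hd. assert (HdR : INR d <> 0) by (apply not_0_INR; lia).
  set (th := 2 * PI * INR j / INR d).
  rewrite (csum_ext_in _ _ (fun b => cpow (cos th, sin th) b)).
  2: { intros b _. rewrite !demoivre. f_equal; f_equal; unfold th; field; auto. }
  destruct (Nat.eqb_spec (j mod d) 0) as [H0|H0].
  - assert (Hj : j = (d * (j / d))%nat) by (rewrite (Nat.div_mod_eq j d) at 1; lia).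
    assert (Eth : th = 0 + 2 * INR (j / d) * PI).
    { unfold th. rewrite Hj at 1. rewrite mult_INR. field. auto. }
    rewrite Eth, cos_period, sin_period, cos_0, sin_0.
    rewrite (csum_ext_in _ _ (fun _ => RtoC 1)). apply csum_const1.
    intros b _. clear. induction b; simpl. reflexivity. rewrite IHb.
    apply injective_projections; simpl; ring.
  - set (u := (cos th, sin th)).
    assert (Hud : cpow u d = RtoC 1).
    { unfold u. rewrite demoivre. replace (INR d * th) with (0 + 2 * INR j * PI) by (unfold th; field; auto).
      rewrite cos_period, sin_period, cos_0, sin_0. reflexivity. }
    assert (Hu1 : Cminus u (RtoC 1) <> RtoC 0).
    { intros E. assert (Ec : cos th = 1).
      { apply (f_equal fst) in E. simpl in E. lra. }
      set (q := (j / d)%nat). set (r := (j mod d)%nat).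
      assert (Hr : (0 < r < d)%nat) by (split; [unfold r; lia| apply Nat.mod_upper_bound; lia]).
      assert (Hj : j = (d * q + r)%nat) by (apply Nat.div_mod_eq).
      assert (Eth : th = 2 * PI * (INR r / INR d) + 2 * INR q * PI).
      { unfold th. rewrite Hj at 1. rewrite plus_INR, mult_INR. field. auto. }
      rewrite Eth, cos_period in Ec. pose proof (cos_lt_1 r d Hr). lra. }
    pose proof (geom u 0 d) as G. simpl in G. rewrite Hud in G.
    replace (Cminus (RtoC 1) (RtoC 1)) with (RtoC 0) in G by ring.
    apply (f_equal (fun x => Cmult x (Cinv (Cminus u (RtoC 1))))) in G.
    replace (Cmult (Cmult (csum (seq 0 d) (fun b : nat => cpow u b)) (Cminus u (RtoC 1))) (Cinv (Cminus u (RtoC 1))))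
      with (csum (seq 0 d) (fun b : nat => cpow u b)) in G by (field; auto).
    rewrite G. ring.
Qed.

Lemma w_eq (A b d : nat) (y : R) : INR d <> 0 ->
  Cdiv (Cplus (Cmult (RtoC (INR A)) (0, y)) (RtoC (INR b))) (RtoC (INR d))
  = (INR b / INR d, INR A * y / INR d).
Proof.
  intros H. unfold Cdiv, Cmult, Cplus, Cinv, RtoC. simpl. apply injective_projections; simpl; field; auto.
Qed.

Lemma hecke_a (f : C -> C) (a : nat -> C) (Hf : fourier_expansion f a) (kap n A : nat) (y : R)
  (Hy : 0 < y) (HA : (0 < A)%nat) (HAn : (n mod A = 0)%nat) (Hn : (0 < n)%nat) :
  is_series (fun J => Cmult (spread A (fun l => Cmult (Cmult (Cinv (cpow (RtoC (INR (n / A))) kap))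
                                                     (a ((n / A) * l)%nat)) (RtoC (INR (n / A)))) J)
                            (cpow (RtoC (exp (-(2*PI*y)))) J))
   (csum (seq 0 (n / A)) (fun b => Cmult (Cinv (cpow (RtoC (INR (n / A))) kap))
        (f (Cdiv (Cplus (Cmult (RtoC (INR A)) (0, y)) (RtoC (INR b))) (RtoC (INR (n / A))))))).
Proof.
  set (d := (n / A)%nat).
  assert (HnAd : n = (A * d)%nat) by (unfold d; rewrite (Nat.div_mod_eq n A) at 1; lia).
  assert (Hd : (0 < d)%nat) by (destruct d; lia).
  assert (HdR : INR d <> 0) by (apply not_0_INR; lia).
  assert (HdR' : 0 < INR d) by (apply lt_0_INR; lia).
  assert (HAR : 0 < INR A) by (apply lt_0_INR; lia).
  set (K := Cinv (cpow (RtoC (INR d)) kap)).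
  set (E := exp (-(2*PI*(INR A * y / INR d)))).
  set (v := fun j => Cmult (Cmult (Cmult K (a j)) (RtoC (E ^ j)))
                      (if Nat.eqb (j mod d) 0 then RtoC (INR d) else RtoC 0)).
  assert (S1 : is_series v (csum (seq 0 d) (fun b => Cmult K
        (f (Cdiv (Cplus (Cmult (RtoC (INR A)) (0, y)) (RtoC (INR b))) (RtoC (INR d))))))).
  { eapply is_series_ext; [|apply csum_series with
       (g := fun b j => Cmult K (Cmult (a j) (cpow (qexp (Cdiv (Cplus (Cmult (RtoC (INR A)) (0, y)) (RtoC (INR b))) (RtoC (INR d)))) j)))].
    - intros j. unfold v.
      rewrite (csum_ext_in _ _ (fun b => Cmult (Cmult (Cmult K (a j)) (RtoC (E ^ j)))
          (cpow (cos (2 * PI * (INR b / INR d)), sin (2 * PI * (INR b / INR d))) j))).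
      + rewrite csum_mult_l, root_sum by exact Hd. reflexivity.
      + intros b _. rewrite w_eq by exact HdR. unfold qexp. simpl Re. simpl Im.
        rewrite cpow_scal. fold E. ring.
    - intros b _.
      assert (Him : 0 < Im (Cdiv (Cplus (Cmult (RtoC (INR A)) (0, y)) (RtoC (INR b))) (RtoC (INR d)))).
      { rewrite w_eq by exact HdR. simpl.
        apply Rdiv_lt_0_compat; [apply Rmult_lt_0_compat|]; lra. }
      pose proof (is_series_scal K _ _ (proj2 Hf _ Him)) as HH. exact HH. }
  assert (S2 := compress d v _ Hd ltac:(intros j Hj; unfold v; apply Nat.eqb_neq in Hj; rewrite Hj; ring) S1).
  assert (S3 := spread_series A _ _ HA S2).
  eapply is_series_ext; [|exact S3].
  intros J. unfold spread. destruct (Nat.eqb_spec (J mod A) 0) as [H0|H0].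
  - assert (HJ : J = (A * (J / A))%nat) by (rewrite (Nat.div_mod_eq J A) at 1; lia).
    unfold v. rewrite (Nat.mul_comm d (J / A)), Nat.Div0.mod_mul. simpl Nat.eqb. cbv iota.
    rewrite (Nat.mul_comm (J / A) d).
    rewrite cpow_RtoC. unfold E. rewrite !exp_pow.
    replace (INR (d * (J / A)) * - (2 * PI * (INR A * y / INR d))) with (INR J * - (2 * PI * y)).
    + fold K. match goal with |- ?x = ?y => change (@eq C x y) end. ring.
    + rewrite HJ at 1. rewrite !mult_INR. field. exact HdR.
  - match goal with |- ?x = ?y => change (@eq C x y) end. ring.
Qed.

Lemma qexp_iy (y : R) : qexp (0, y) = RtoC (exp (-(2*PI*y))).
Proof.
  unfold qexp. simpl Re. simpl Im. rewrite Rmult_0_r, cos_0, sin_0.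
  apply injective_projections; simpl; ring.
Qed.

Definition hcond (N n A : nat) : bool := andb (Nat.eqb (n mod A) 0) (Nat.eqb (Nat.gcd A N) 1).
Definition hu (a : nat -> C) (kap n A : nat) (l : nat) : C :=
  Cmult (Cmult (Cinv (cpow (RtoC (INR (n / A))) kap)) (a ((n / A) * l)%nat)) (RtoC (INR (n / A))).
Definition hcoef (a : nat -> C) (kap N n J : nat) : C :=
  Cmult (RtoC (INR n ^ (kap - 1)))
    (csum (seq 1 n) (fun A => if hcond N n A then spread A (hu a kap n A) J else RtoC 0)).

Lemma hecke_series (f : C -> C) (a : nat -> C) (Hf : fourier_expansion f a) (kap N n : nat) (y : R)
  (Hy : 0 < y) (Hn : (0 < n)%nat) :
  is_series (fun J => Cmult (hcoef a kap N n J) (cpow (RtoC (exp (-(2*PI*y)))) J))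
    (hecke kap N n f (0, y)).
Proof.
  unfold hecke.
  set (s := exp (-(2*PI*y))).
  assert (H1 := csum_series (seq 1 n)
     (fun A J => if hcond N n A then Cmult (spread A (hu a kap n A) J) (cpow (RtoC s) J) else RtoC 0)
     (fun A => if andb (Nat.eqb (n mod A) 0) (Nat.eqb (Nat.gcd A N) 1) then
         csum (seq 0 (n / A)) (fun b =>
           Cmult (Cinv (cpow (RtoC (INR (n / A))) kap))
                 (f (Cdiv (Cplus (Cmult (RtoC (INR A)) (0, y)) (RtoC (INR b)))
                          (RtoC (INR (n / A))))))
       else RtoC 0)).
  assert (H2 : is_series
     (fun J => csum (seq 1 n) (fun A => if hcond N n A then Cmult (spread A (hu a kap n A) J) (cpow (RtoC s) J) else RtoC 0))
     (csum (seq 1 n) (fun A => if andb (Nat.eqb (n mod A) 0) (Nat.eqb (Nat.gcd A N) 1) then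
         csum (seq 0 (n / A)) (fun b =>
           Cmult (Cinv (cpow (RtoC (INR (n / A))) kap))
                 (f (Cdiv (Cplus (Cmult (RtoC (INR A)) (0, y)) (RtoC (INR b)))
                          (RtoC (INR (n / A))))))
       else RtoC 0))).
  { apply H1. intros A HA. apply in_seq in HA. unfold hcond.
    destruct (andb (Nat.eqb (n mod A) 0) (Nat.eqb (Nat.gcd A N) 1)) eqn:Ec.
    - apply Bool.andb_true_iff in Ec. destruct Ec as [E1 _]. apply Nat.eqb_eq in E1.
      apply (hecke_a f a Hf kap n A y Hy ltac:(lia) E1 Hn).
    - apply is_series_zero. }
  pose proof (is_series_scal (RtoC (INR n ^ (kap - 1))) _ _ H2) as H3.
  eapply is_series_ext; [|exact H3].
  intros J. unfold hcoef. simpl.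
  rewrite (csum_ext_in _ _ (fun A => Cmult (cpow (RtoC s) J) (if hcond N n A then spread A (hu a kap n A) J else RtoC 0))).
  - rewrite csum_mult_l. unfold scal; simpl. unfold mult; simpl. ring.
  - intros A _. destruct (hcond N n A); ring.
Qed.

Lemma gcd1l (x : nat) : Nat.gcd 1 x = 1%nat.
Proof. apply Nat.divide_gcd_iff, Nat.divide_1_l. Qed.
Lemma gcd1r (x : nat) : Nat.gcd x 1 = 1%nat.
Proof. rewrite Nat.gcd_comm. apply gcd1l. Qed.

Lemma hcoef_coprime (a : nat -> C) (kap N n J : nat) : (0 < n)%nat -> (0 < J)%nat -> Nat.gcd n J = 1%nat ->
  hcoef a kap N n J = Cmult (RtoC (INR n ^ (kap - 1)))
     (Cmult (Cmult (Cinv (cpow (RtoC (INR n)) kap)) (a (n * J)%nat)) (RtoC (INR n))).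
Proof.
  intros Hn HJ Hg. unfold hcoef. f_equal.
  destruct n as [|n']; [lia|].
  change (seq 1 (S n')) with (1%nat :: seq 2 n').
  unfold csum at 1. simpl fold_right. fold (csum (seq 2 n') (fun A => if hcond N (S n') A then spread A (hu a kap (S n') A) J else RtoC 0)).
  rewrite csum_zero.
  - unfold spread. rewrite Nat.mod_1_r, Nat.div_1_r. unfold hu. rewrite Nat.div_1_r. cbv [Nat.eqb].
    match goal with |- ?x = ?y => change (@eq C x y) end. ring.
  - intros A HA. apply in_seq in HA. unfold hcond.
    destruct (Nat.eqb_spec (S n' mod A) 0) as [E1|E1]; [|reflexivity]. simpl.
    destruct (Nat.gcd A N =? 1)%nat; [|reflexivity].
    unfold spread. destruct (Nat.eqb_spec (J mod A) 0) as [E2|E2]; [|reflexivity].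
    exfalso. apply Nat.Lcm0.mod_divide in E1, E2.
    assert (Hd := Nat.gcd_greatest _ _ _ E1 E2). rewrite Hg in Hd.
    apply Nat.divide_pos_le in Hd; lia.
Qed.

Lemma RtoC_neq0 (r : R) : r <> 0 -> RtoC r <> RtoC 0.
Proof. intros H E. apply (f_equal fst) in E. simpl in E. auto. Qed.

Lemma multiplicative (f : C -> C) (a : nat -> C) (kap N : nat) (Hf : fourier_expansion f a)
  (H1 : a 1%nat = RtoC 1) (He : hecke_eigenform kap N f) (n m : nat) :
  (0 < n)%nat -> (0 < m)%nat -> Nat.gcd n m = 1%nat -> a (n * m)%nat = Cmult (a n) (a m).
Proof.
  intros Hn Hm Hg.
  destruct (He n Hn) as [lam Hl].
  set (coef := fun J => Cminus (hcoef a kap N n J) (Cmult lam (a J))).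
  assert (Hz : forall J, coef J = RtoC 0).
  { apply complex_unique. intros s Hs.
    set (y := - ln s / (2 * PI)).
    assert (Hy : 0 < y).
    { unfold y. apply Rdiv_lt_0_compat. assert (ln s < ln 1) by (apply ln_increasing; lra). rewrite ln_1 in *. lra.
      pose proof PI_RGT_0. lra. }
    assert (Es : exp (-(2*PI*y)) = s).
    { unfold y. replace (-(2 * PI * (- ln s / (2 * PI)))) with (ln s) by (field; pose proof PI_RGT_0; lra).
      apply exp_ln. lra. }
    assert (Hs1 := hecke_series f a Hf kap N n y Hy Hn). rewrite Es in Hs1.
    assert (Hs2 := proj2 Hf (0, y) Hy). rewrite qexp_iy, Es in Hs2.
    apply (is_series_scal lam) in Hs2.
    assert (Hs3 := is_series_minus _ _ _ _ Hs1 Hs2).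
    rewrite Hl in Hs3 by exact Hy.
    replace (RtoC 0) with (plus (Cmult lam (f (0, y))) (opp (scal lam (f (0, y))))).
    - eapply is_series_ext; [|exact Hs3]. intros J. unfold coef.
      unfold scal, plus, opp; simpl. unfold mult; simpl. ring.
    - unfold scal, plus, opp; simpl. unfold mult; simpl. ring. }
  assert (Hc1 := Hz 1%nat). assert (Hcm := Hz m). unfold coef in Hc1, Hcm.
  rewrite hcoef_coprime in Hc1, Hcm; auto; [|apply gcd1r].
  rewrite Nat.mul_1_r, H1 in Hc1.
  set (al := Cmult (Cmult (RtoC (INR n ^ (kap - 1))) (Cinv (cpow (RtoC (INR n)) kap))) (RtoC (INR n))).
  assert (Hal : al <> RtoC 0).
  { unfold al. rewrite cpow_RtoC.
    assert (INR n <> 0) by (apply not_0_INR; lia).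
    rewrite <- RtoC_inv by (apply pow_nonzero; auto). rewrite <- !RtoC_mult.
    apply RtoC_neq0. apply Rmult_integral_contrapositive; split; [apply Rmult_integral_contrapositive; split|]; auto.
    apply pow_nonzero; auto. apply Rinv_neq_0_compat. apply pow_nonzero; auto. }
  assert (E1 : Cmult al (a n) = lam).
  { match type of Hc1 with Cminus ?X ?Y = _ =>
      transitivity (Cplus (Cminus X Y) lam); [unfold al; ring|] end.
    rewrite Hc1. ring. }
  assert (E2 : Cmult al (a (n * m)%nat) = Cmult lam (a m)).
  { match type of Hcm with Cminus ?X ?Y = _ =>
      transitivity (Cplus (Cminus X Y) (Cmult lam (a m))); [unfold al; ring|] end.
    rewrite Hcm. ring. }
  rewrite <- E1 in E2.
  apply (f_equal (fun x => Cmult (Cinv al) x)) in E2.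
  match goal with H : ?x = ?y |- _ => change (@eq C x y) in H end.
  match goal with |- ?x = ?y => change (@eq C x y) end.
  replace (a (n * m)%nat) with (Cmult (Cinv al) (Cmult al (a (n * m)%nat))) by (field; auto).
  rewrite E2. field. auto.
Qed.

Lemma fact_div_mono (p q : nat) : (p <= q)%nat -> Nat.divide (fact p) (fact q).
Proof.
  induction 1 as [|q H IH]. apply Nat.divide_refl.
  simpl fact. apply Nat.divide_trans with (fact q); auto.
  exists (S q). simpl. lia.
Qed.

Lemma div_fact (j p : nat) : (1 <= j <= p)%nat -> Nat.divide j (fact p).
Proof.
  intros [H1 H2]. apply Nat.divide_trans with (fact j). 
  - destruct j; [lia|]. simpl fact. exists (fact j). lia.
  - apply fact_div_mono; auto.
Qed.

Lemma nu_sq_div (v K : nat) : (1 <= v <= K)%nat -> Nat.divide (v * v) (fact (2 * K)).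
Proof.
  intros Hv. apply Nat.divide_trans with (fact (2 * v)); [|apply fact_div_mono; lia].
  replace (2 * v)%nat with (S (2 * v - 1)) by lia.
  change (fact (S (2 * v - 1))) with (S (2 * v - 1) * fact (2 * v - 1))%nat.
  replace (S (2 * v - 1) * fact (2 * v - 1))%nat with (v * (2 * fact (2 * v - 1)))%nat by lia.
  apply Nat.mul_divide_mono_l. apply Nat.divide_mul_r. apply div_fact. lia.
Qed.

Lemma coprime_mi (v m mi K : nat) : (1 <= v <= K)%nat -> Nat.divide (fact (2 * K)) m ->
  (m + v = v * mi)%nat -> Nat.gcd v mi = 1%nat /\ (0 < mi)%nat.
Proof.
  intros Hv Hm Hmi.
  destruct (Nat.divide_trans _ _ _ (nu_sq_div v K Hv) Hm) as [t Ht].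
  assert (Emi : mi = (1 + t * v)%nat).
  { apply (Nat.mul_cancel_l _ _ v); [lia|]. nia. }
  split. rewrite Emi, Nat.gcd_add_mult_diag_r. apply gcd1r. lia.
Qed.

Lemma fold_max_ge (l : list nat) (x : nat) : In x l -> (x <= fold_right Nat.max 0 l)%nat.
Proof.
  induction l as [|y l IH]; simpl; intros H. contradiction.
  destruct H as [->|H]. lia. specialize (IH H). lia.
Qed.

Lemma fold_min_pos (l : list R) : (forall x, In x l -> 0 < x) -> 0 < fold_right Rmin 1 l.
Proof.
  induction l as [|y l IH]; simpl; intros H. lra.
  apply Rmin_pos. apply H; auto. apply IH; auto.
Qed.

Lemma fold_min_le (l : list R) (x : R) : In x l -> fold_right Rmin 1 l <= x.
Proof.
  induction l as [|y l IH]; simpl; intros H. contradiction.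
  destruct H as [->|H]. apply Rmin_l. eapply Rle_trans. apply Rmin_r. auto.
Qed.

Lemma Cmod_lambda (kap : nat) (a : nat -> C) (n : nat) : (0 < n)%nat ->
  Cmod (lambda_f kap a n) = Cmod (a n) / sqrt (INR n) ^ (kap - 1).
Proof.
  intros Hn. assert (0 < sqrt (INR n)) by (apply sqrt_lt_R0, lt_0_INR; lia).
  assert (0 < sqrt (INR n) ^ (kap - 1)) by (apply pow_lt; auto).
  unfold lambda_f. rewrite Cmod_div. rewrite Cmod_R, Rabs_pos_eq by lra. reflexivity.
  apply RtoC_neq0. lra.
Qed.

Lemma sqrt_pow_pos (n e : nat) : (0 < n)%nat -> 0 < sqrt (INR n) ^ e.
Proof. intros. apply pow_lt. apply sqrt_lt_R0, lt_0_INR; lia. Qed.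

Theorem proposition5p1
  (k : nat) (hk : (2 <= k)%nat)
  (kap N : nat -> nat) (f : nat -> C -> C) (a : nat -> nat -> C) (nu : nat -> nat)
  (hprim : forall i, (i < k)%nat -> squarefree (N i) /\ primitive_form (kap i) (N i) (f i) (a i))
  (hnu_pos : forall i, (i < k)%nat -> (0 < nu i)%nat)
  (hnu_inj : forall i j, (i < k)%nat -> (j < k)%nat -> nu i = nu j -> i = j)
  (hnz : forall i, (i < k)%nat -> a i (nu i) <> RtoC 0) :
  let K := fold_right Nat.max 0%nat (map nu (seq 0 k)) in
  exists c0 : R, 0 < c0 /\
    forall m : nat, (0 < m)%nat -> Nat.divide (fact (2 * K)) m ->
    forall i : nat, (i < k)%nat -> forall mi : nat, (m + nu i = nu i * mi)%nat ->
      (c0 * Cmod (lambda_f (kap i) (a i) mi) <= Cmod (lambda_f (kap i) (a i) ((m + nu i)%nat))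
       <= / c0 * Cmod (lambda_f (kap i) (a i) mi)) /\
      (c0 * Cmod (lambda_f (kap i) (a i) mi)
       <= Cmod (a i ((m + nu i)%nat)) / sqrt (INR m) ^ (kap i - 1)
       <= / c0 * Cmod (lambda_f (kap i) (a i) mi)).
Proof.
  intros K.
  set (L := fun i => Cmod (lambda_f (kap i) (a i) (nu i))).
  set (B := fun i => sqrt (INR (1 + nu i)) ^ (kap i - 1)).
  set (g := fun i => Rmin (L i) (/ (L i * B i))).
  assert (HL : forall i, (i < k)%nat -> 0 < L i).
  { intros i Hi. unfold L. rewrite Cmod_lambda by auto.
    apply Rdiv_lt_0_compat. apply Cmod_gt_0. auto. apply sqrt_pow_pos; auto. }
  assert (HB : forall i, 1 <= B i).
  { intros i. unfold B. apply pow_R1_Rle. rewrite <- sqrt_1. apply sqrt_le_1; try lra.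
    apply pos_INR. rewrite S_INR. pose proof (pos_INR (nu i)). lra. }
  set (c0 := fold_right Rmin 1 (map g (seq 0 k))).
  assert (Hc0g : forall i, (i < k)%nat -> c0 <= g i).
  { intros i Hi. apply fold_min_le. apply in_map. apply in_seq. lia. }
  assert (Hc0 : 0 < c0).
  { apply fold_min_pos. intros x Hx. apply in_map_iff in Hx. destruct Hx as [i [<- Hi]].
    apply in_seq in Hi. unfold g. apply Rmin_pos. apply HL; lia.
    apply Rinv_0_lt_compat. apply Rmult_lt_0_compat. apply HL; lia. pose proof (HB i); lra. }
  exists c0. split; [exact Hc0|].
  intros m Hm Hdiv i Hi mi Hmi.
  assert (HLi := HL i Hi). assert (HBi := HB i).
  assert (Hc1 : c0 <= L i) by (apply Rle_trans with (g i); [apply Hc0g; auto| unfold g; apply Rmin_l]).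
  assert (Hc2 : c0 * (L i * B i) <= 1).
  { assert (c0 <= / (L i * B i)) by (apply Rle_trans with (g i); [apply Hc0g; auto| unfold g; apply Rmin_r]).
    apply Rmult_le_compat_r with (r := L i * B i) in H; [|nra].
    rewrite Rinv_l in H; nra. }
  assert (HiLB : L i * B i <= / c0).
  { apply Rmult_le_reg_l with c0; auto. rewrite Rinv_r by lra. lra. }
  assert (HiL : L i <= / c0) by nra.
  assert (HvK : (1 <= nu i <= K)%nat).
  { split. apply hnu_pos; auto. apply fold_max_ge. apply in_map. apply in_seq. lia. }
  destruct (coprime_mi (nu i) m mi K HvK Hdiv Hmi) as [Hg Hmi0].
  destruct (hprim i Hi) as [_ [_ [_ [_ [_ [Hf [H1 [He _]]]]]]]].
  assert (Hmul := multiplicative (f i) (a i) (kap i) (N i) Hf H1 He (nu i) mi ltac:(lia) Hmi0 Hg).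
  rewrite Hmi.
  set (e := (kap i - 1)%nat).
  set (x := Cmod (lambda_f (kap i) (a i) mi)).
  assert (Hx : 0 <= x) by apply Cmod_ge_0.
  assert (Sv := sqrt_pow_pos (nu i) e ltac:(lia)).
  assert (Smi := sqrt_pow_pos mi e Hmi0).
  assert (Sm := sqrt_pow_pos m e Hm).
  assert (Key : Cmod (lambda_f (kap i) (a i) (nu i * mi)) = L i * x).
  { unfold L, x. rewrite !Cmod_lambda by (auto; nia). rewrite Hmul, Cmod_mult.
    rewrite mult_INR, sqrt_mult by apply pos_INR. rewrite Rpow_mult_distr. fold e. field. lra. }
  set (r := sqrt (INR (nu i * mi)) / sqrt (INR m)).
  assert (Hsm : 0 < sqrt (INR m)) by (apply sqrt_lt_R0, lt_0_INR; lia).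
  assert (Key2 : Cmod (a i (nu i * mi)%nat) / sqrt (INR m) ^ e = L i * x * r ^ e).
  { rewrite <- Key. rewrite Cmod_lambda by nia. fold e. unfold r. unfold Rdiv.
    rewrite Rpow_mult_distr, pow_inv.
    assert (0 < sqrt (INR (nu i * mi)) ^ e) by (apply sqrt_pow_pos; nia). field. lra. }
  assert (Hr1 : 1 <= r ^ e).
  { apply pow_R1_Rle. unfold r. apply Rmult_le_reg_r with (sqrt (INR m)); auto.
    unfold Rdiv. rewrite Rmult_assoc, Rinv_l, Rmult_1_l, Rmult_1_r by lra.
    apply sqrt_le_1; try apply pos_INR. apply le_INR. lia. }
  assert (Hr2 : r ^ e <= B i).
  { unfold B. fold e. apply pow_incr. split. unfold r. apply Rdiv_le_0_compat; auto. apply sqrt_pos.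
    unfold r. apply Rmult_le_reg_r with (sqrt (INR m)); auto.
    unfold Rdiv. rewrite Rmult_assoc, Rinv_l, Rmult_1_r by lra.
    rewrite <- sqrt_mult by apply pos_INR. apply sqrt_le_1; try apply pos_INR.
    apply Rmult_le_pos; apply pos_INR.
    rewrite <- mult_INR. apply le_INR. nia. }
  rewrite Key, Key2.
  split; split.
  - apply Rmult_le_compat_r; auto.
  - apply Rmult_le_compat_r; auto.
  - apply Rle_trans with (L i * x). apply Rmult_le_compat_r; auto.
    rewrite <- (Rmult_1_r (L i * x)) at 1. apply Rmult_le_compat_l; nra.
  - apply Rle_trans with (L i * x * B i). apply Rmult_le_compat_l; nra.
    replace (L i * x * B i) with ((L i * B i) * x) by ring. apply Rmult_le_compat_r; auto.
Qed.
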